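(* Let $N\ge1$, $1\le q_0\le N$, $g_0:=\gcd(2N+2,q_0)$ and $\kappa_0:=\frac{2N+2}{g_0}$. Let $\overline q_k=(kq_0)\bmod(2N+2)$ if this is $<N+1$ and $\overline q_k=2N+2-(kq_0)\bmod(2N+2)$ otherwise ($k\ge1$). Then the $q_0$-breather sequence of modes $\{\overline q_k\}$ coincides with $\mathrm{Fix}(R^{\kappa_0})\cap\mathrm{Fix}(S)$ regarded as an invariant submanifold of $\mathrm{Fix}(S)$; that is, $\{\overline q_k:k\ge1\}\cap\{1,\dots,N\}=\{j\in\{1,\dots,N\}: j\equiv0 \bmod g_0\}$, the latter being exactly the set of modes $j$ whose coordinates $(Q_j,P_j)$ are not forced to vanish on $\mathrm{Fix}(R^{\kappa_0})\cap\mathrm{Fix}(S)$.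
   Context: Embed the fixed-boundary FPU chain of $N$ particles in the periodic chain of $2N+2$ particles, with Fourier mode coordinates $(Q_j,P_j)$, $j\in\mathbb Z/(2N+2)$. $R$ is the lattice shift symmetry of the periodic chain and $S$ the reflection symmetry $(Q_j,P_j)\mapsto(-Q_{2N+2-j},-P_{2N+2-j})$; for a map $G$, $\mathrm{Fix}(G)$ is its fixed-point set. Then $\mathrm{Fix}(S)=\{Q_j=-Q_{2N+2-j},P_j=-P_{2N+2-j}\}$ is identified with the fixed-boundary chain (modes $j=1,\dots,N$), and for $2N+2=\kappa g$, $\mathrm{Fix}(R^\kappa)=\{Q_j=P_j=0 \text{ whenever } j\not\equiv0\bmod g\}$. *)

(* Defs.v *)
From HB Require Import structures.
From mathcomp Require Import all_boot all_order all_algebra.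
From mathcomp Require Import reals.
Set Implicit Arguments. Unset Strict Implicit. Unset Printing Implicit Defensive.
Import Order.TTheory GRing.Theory Num.Theory.

(* Periodic chain with M = 2N+2 particles; Fourier modes indexed by
   j in Z/M, represented by naturals j < M.  A point of phase space is a
   pair of mode-coordinate functions Q P : nat -> R (only j < M matter). *)

Definition qbar (N q0 k : nat) : nat :=
  let r := (k * q0) %% (2 * N + 2) in
  if r < N + 1 then r else (2 * N + 2) - r.

Definition in_FixS (R : realType) (M : nat) (Q P : nat -> R) : Prop :=
  forall j, (j < M)%N ->
    Q j = (- Q ((M - j) %% M)%N)%R /\ P j = (- P ((M - j) %% M)%N)%R.

Definition in_FixRpow (R : realType) (M kappa : nat) (Q P : nat -> R) : Prop :=
  forall j, (j < M)%N -> ~~ ((M %/ kappa) %| j)%N -> Q j = 0%R /\ P j = 0%R.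

(* Main.v *)
Require Import Defs.
From HB Require Import structures.
From mathcomp Require Import all_boot all_order all_algebra.
From mathcomp Require Import reals.
From mathcomp Require Import zify.
Import Order.TTheory GRing.Theory Num.Theory.

Lemma exists_k (N q0 j : nat) : 1 <= N -> 1 <= q0 <= N -> 1 <= j <= N ->
  gcdn (2*N+2) q0 %| j -> exists k, 1 <= k /\ qbar N q0 k = j.
Proof.
move=> HN /andP[Hq1 HqN] /andP[Hj1 HjN] /dvdnP[t Ht].
set M := 2*N+2. set g := gcdn M q0.
have HM : 0 < M by rewrite /M; lia.
have [a _ Ha] := Bezoutr q0 HM.
rewrite gcdnC -/g in Ha. rewrite -/M -/g in Ht.
have Hgq : g %| q0 := dvdn_gcdr M q0.
have Hg0 : 0 < g by rewrite gcdn_gt0 HM.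
have Hgle : g <= q0 by apply: dvdn_leq.
have Ha0 : 0 < a.
  case: a Ha {Hgle} => [|a' _]; last by [].
  rewrite mul0n addn0 => /dvdn_leq => /(_ Hg0).
  have : g <= q0 by apply: dvdn_leq.
  rewrite /M; lia.
have Ht0 : 0 < t by move: Hj1; rewrite Ht; lia.
exists (a * (M - 1) * t); split.
  rewrite !muln_gt0 Ha0 Ht0 andbT /M; lia.
have Hmod : (a * (M - 1) * t * q0) %% M = j.
  rewrite -[RHS](@modn_small j M); last by rewrite /M; lia.
  apply/eqP; rewrite -(eqn_modDr (g * (M - 1) * t)).
  have -> : a * (M - 1) * t * q0 + g * (M - 1) * t = (g + a * q0) * ((M - 1) * t).
    nia.
  have -> : j + g * (M - 1) * t = (g * t) * M.
    rewrite Ht; nia.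
  case/dvdnP: Ha => c ->.
  by rewrite mulnAC modnMl modnMl.
rewrite /qbar -/M Hmod.
have -> : j < N + 1 by lia.
by [].
Qed.

Theorem proposition4 (R : realType) (N q0 : nat) :
  1 <= N -> 1 <= q0 <= N ->
  let M := 2 * N + 2 in
  let g0 := gcdn M q0 in
  let kappa0 := M %/ g0 in
  (forall j : nat,
     ((exists k, 1 <= k /\ qbar N q0 k = j) /\ 1 <= j <= N)
     <-> (1 <= j <= N /\ g0 %| j))
  /\
  (forall j : nat, 1 <= j <= N ->
     ((g0 %| j) <->
      exists Q P : nat -> R,
        in_FixRpow M kappa0 Q P /\ in_FixS M Q P /\
        (Q j <> 0%R \/ P j <> 0%R))).
Proof.
move=> HN Hq M g0 kappa0.
have HM : 0 < M by rewrite /M; lia.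
have Hg0 : 0 < g0 by rewrite gcdn_gt0 HM.
have HgM : g0 %| M := dvdn_gcdl M q0.
have Hgq : g0 %| q0 := dvdn_gcdr M q0.
have Hkap : M %/ kappa0 = g0.
  rewrite /kappa0; case/dvdnP: (HgM) => c Hc.
  have Hc0 : 0 < c by move: HM; rewrite Hc muln_gt0 => /andP[].
  have -> : M %/ g0 = c by rewrite Hc mulnK.
  by rewrite Hc mulKn.
split.
  move=> j; split.
    move=> [[k [Hk Hqk]] Hj]; split => //.
    move: Hqk; rewrite /qbar -/M.
    have Hr : g0 %| (k * q0) %% M .
      by move: (dvdn_mull k Hgq); rewrite /dvdn (modn_dvdm _ HgM).
    case: ifP => _ <-; first exact: Hr.
    by rewrite (dvdn_subr (ltnW (ltn_pmod _ HM)) HgM).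
  move=> [Hj Hd]; split => //.
  by move: Hd; rewrite /g0 /M => Hd; exact: (@exists_k N q0 j HN Hq Hj Hd).
move=> j /andP[Hj1 HjN]; split.
  move=> Hd.
  exists (fun i => if i == j then 1%R else if i == M - j then (-1)%R else 0%R).
  exists (fun _ => 0%R).
  split; [|split].
  - move=> i Hi; rewrite Hkap => Hn; split => //.
    have -> : (i == j) = false by apply/negbTE; apply: contraNneq Hn => ->.
    have -> : (i == M - j) = false.
      apply/negbTE; apply: contraNneq Hn => ->; by rewrite dvdn_subr // /M; lia.
    by [].
  - move=> i Hi; split; last by rewrite oppr0.
    have [->|Hi0] := eqVneq i 0.
      rewrite subn0 modnn.
      have -> : (0 == j) = false by apply/negbTE; rewrite eq_sym -lt0n.
      have -> : (0 == M - j) = false by apply/negbTE; rewrite eq_sym -lt0n /M; lia.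
      by rewrite oppr0.
    rewrite modn_small; last by lia.
    have [->|Hij] := eqVneq i j.
      have -> : (M - j == j) = false by apply/negbTE; apply/eqP; rewrite /M; lia.
      by rewrite eqxx opprK.
    have [->|Hik] := eqVneq i (M - j).
      have -> : M - (M - j) = j by rewrite /M; lia.
      by rewrite eqxx.
    have -> : (M - i == j) = false by apply/negbTE; apply/eqP; lia.
    have -> : (M - i == M - j) = false by apply/negbTE; apply/eqP; lia.
    by rewrite oppr0.
  - left; rewrite eqxx; apply/eqP; exact: oner_neq0.
move=> [Q [P [HR [_ Hnz]]]].
apply/negPn/negP => Hn.
have [HQ HP] := HR j ltac:(rewrite /M; lia) ltac:(by rewrite Hkap).
by case: Hnz.
Qed.
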